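(* Let $q$ be a prime power and $n$ a positive integer. Let $g, h\in \mathbb{F}_q[x]$ be relatively prime polynomials such that $g(x)$ divides $x^n-1$ and $x^n-1$ divides $g(x)\cdot h(x)$. Then for every polynomial $f\in \mathbb{F}_{q^n}[x]$, the polynomial $P_{f,g,h}(x)=f(L_g(x))+L_h(x)$ is a permutation polynomial of $\mathbb{F}_{q^n}$ if and only if $L_g(f(x))$ induces a permutation of the set $L_g(\mathbb{F}_{q^n})=\{L_g(c):c\in\mathbb{F}_{q^n}\}$. In particular, if $f(L_g(\mathbb{F}_{q^n}))\subseteq L_g(\mathbb{F}_{q^n})$, then $P_{f,g,h}$ is a permutation polynomial of $\mathbb{F}_{q^n}$ if and only if $f$ induces a permutation of $L_g(\mathbb{F}_{q^n})$.
   Context: For a polynomial $u(x)=\sum_{i=0}^m a_i x^i\in\mathbb{F}_q[x]$, its linearized $q$-associate is $L_u(x)=\sum_{i=0}^m a_i x^{q^i}$. A permutation polynomial of $\mathbb{F}_{q^n}$ is a polynomial inducing a bijection of $\mathbb{F}_{q^n}$. *)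

(* Defs.v *)
From HB Require Import structures.
From mathcomp Require Import all_boot all_order all_algebra all_field.
Set Implicit Arguments. Unset Strict Implicit. Unset Printing Implicit Defensive.
Import GRing.Theory.
Local Open Scope ring_scope.

(* Linearized q-associate of u = \sum a_i x^i in F[x], viewed in L[x]
   (coefficients embedded via F -> L):  L_u(x) = \sum a_i x^(q^i). *)
Definition linq (F : fieldType) (L : fieldExtType F) (q : nat) (u : {poly F})
  : {poly L} :=
  \sum_(i < size u) (u`_i)%:A%:P * 'X^(q ^ i).

Definition poly_image (L : fieldType) (p : {poly L}) : L -> Prop :=
  fun y => exists c, p.[c] = y.

Definition permutes_set (T : Type) (S : T -> Prop) (phi : T -> T) : Prop :=
  [/\ forall x, S x -> S (phi x),
      forall x y, S x -> S y -> phi x = phi y -> x = y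
    & forall y, S y -> exists x, S x /\ phi x = y].

Definition perm_poly (L : fieldType) (p : {poly L}) : Prop :=
  bijective (fun x : L => p.[x]).

(* Main.v *)
Require Import Defs.
From HB Require Import structures.
From mathcomp Require Import all_boot all_order all_algebra all_fingroup all_solvable all_field.
Set Implicit Arguments. Unset Strict Implicit. Unset Printing Implicit Defensive.
Import GRing.Theory.
Local Open Scope ring_scope.

Section Frob.
Variables (F : finFieldType) (L : fieldExtType F).

Definition frobq (x : L) : L := x ^+ #|F|.

Lemma card_pnat : exists2 p, p \in [pchar L] & p.-nat #|F|.
Proof.
have [p pr_p pF] := finPcharP F.
exists p; first by rewrite (pchar_lalg L).
have := abelem_pgroup (fin_ring_pchar_abelem pF).
by rewrite /pgroup cardsT.
Qed.

Lemma frobqD (x y : L) : frobq (x + y) = frobq x + frobq y.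
Proof.
have [p pL pq] := card_pnat.
by rewrite /frobq exprDn_pchar // (eq_pnat _ (pcharf_eq pL)).
Qed.

Lemma frobq_is_linear : linear frobq.
Proof.
move=> a u v; rewrite frobqD; congr (_ + _).
have E : a%:A ^+ #|F| = a%:A :> L.
  by rewrite -[a%:A]/(in_alg L a) -rmorphXn expf_card.
by rewrite /frobq -mulr_algl exprMn E mulr_algl.
Qed.

HB.instance Definition _ := GRing.isLinear.Build F L L *:%R frobq frobq_is_linear.

Definition sig : 'End(L) := linfun frobq.
Lemma sigE x : sig x = x ^+ #|F|.
Proof. by rewrite lfunE. Qed.

End Frob.
Section Abs.
Variable V : zmodType.
Variables A B U W : V -> V.
Hypotheses (AD : forall x y, A (x + y) = A x + A y) (AN : forall x, A (- x) = - A x)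
  (BD : forall x y, B (x + y) = B x + B y) (BN : forall x, B (- x) = - B x)
  (U0 : U 0 = 0) (W0 : W 0 = 0)
  (dec : forall x, x = U (A x) + W (B x))
  (AB : forall x, A (B x) = 0) (BA : forall x, B (A x) = 0)
  (AU : forall x, A (U x) = U (A x)) (BU : forall x, B (U x) = U (B x))
  (AW : forall x, A (W x) = W (A x)) (BW : forall x, B (W x) = W (B x)).

Lemma AB_F1 x : A (U (A x)) = A x.
Proof. by rewrite {2}(dec x) AD AW AB W0 addr0. Qed.

Lemma AB_F2 x : B (W (B x)) = B x.
Proof. by rewrite {2}(dec x) BD BU BA U0 add0r. Qed.

Lemma AB_F3 a b : A (U (A a) + W (B b)) = A a /\ B (U (A a) + W (B b)) = B b.
Proof.
split; first by rewrite AD AB_F1 AW AB W0 addr0.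
by rewrite BD AB_F2 BU BA U0 add0r.
Qed.

Lemma AB_F4 x : A x = 0 -> B x = 0 -> x = 0.
Proof. by move=> Ax Bx; rewrite (dec x) Ax Bx U0 W0 addr0. Qed.

Lemma AB_F5 z : A z = 0 -> z = B (W z).
Proof. by move=> Az; rewrite {1}(dec z) Az U0 add0r BW. Qed.

Lemma A_sub x y : A (x - y) = A x - A y. Proof. by rewrite AD AN. Qed.
Lemma B_sub x y : B (x - y) = B x - B y. Proof. by rewrite BD BN. Qed.

Let S := fun y => exists c, A c = y.

Lemma abs_part1 (f : V -> V) :
  bijective (fun x => f (A x) + B x) <-> permutes_set S (fun x => A (f x)).
Proof.
have AP x : A (f (A x) + B x) = A (f (A x)) by rewrite AD AB addr0.
split.
- case=> Pinv PK KP; split.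
  + by move=> x _; exists (f x).
  + move=> _ _ [a <-] [b <-] E.
    have /AB_F5 Et : A (f (A a) - f (A b)) = 0 by rewrite A_sub E subrr.
    set t' := W (f (A a) - f (A b)) in Et.
    have [E1 E2] := AB_F3 b (a + t').
    have : f (A b) + B (U (A b) + W (B (a + t'))) = f (A a) + B a.
      by rewrite E2 BD -Et addrCA [f (A b) + _]addrC subrK addrC.
    move=> HP.
    have Hx : U (A b) + W (B (a + t')) = a.
      by rewrite -[LHS]PK -[RHS]PK /= E1 HP.
    by rewrite -E1 Hx.
  + move=> _ [z <-]; exists (A (Pinv z)); split; first by exists (Pinv z).
    by rewrite -AP KP.
- case=> _ inj surj.
  have Pinj : injective (fun x => f (A x) + B x).
    move=> x y /= E.
    have EA : A x = A y.
      apply: inj; [by exists x | by exists y | by rewrite -!AP E].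
    move: E; rewrite EA => /addrI EB.
    apply/eqP; rewrite -subr_eq0; apply/eqP; apply: AB_F4.
      by rewrite A_sub EA subrr.
    by rewrite B_sub EB subrr.
  have Psurj z : exists x, f (A x) + B x == z.
    have [w [[a <-] Ew]] := surj (A z) (ex_intro _ z erefl).
    have /AB_F5 Et : A (z - f (A a)) = 0 by rewrite A_sub Ew subrr.
    have [E1 E2] := AB_F3 a (W (z - f (A a))).
    exists (U (A a) + W (B (W (z - f (A a))))).
    by rewrite E1 E2 -Et addrC subrK.
  exists (fun z => xchoose (Psurj z)) => [x|z].
    by apply: Pinj; apply/eqP; apply: (xchooseP (Psurj _)).
  by apply/eqP; apply: (xchooseP (Psurj _)).
Qed.

Lemma abs_part2 (f : V -> V) : (forall y, S y -> S (f y)) ->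
  permutes_set S (fun x => A (f x)) <-> permutes_set S f.
Proof.
move=> Sf.
have Ainj y z : S y -> S z -> A y = A z -> y = z.
  by move=> [a <-] [b <-] E; rewrite -(AB_F1 a) -(AB_F1 b) !AU E.
have SU y : S y -> S (U y) /\ A (U y) = y.
  by move=> [a <-]; split; [exists (U a); rewrite AU | rewrite AB_F1].
split.
- case=> _ inj surj; split=> //.
  + by move=> x y Sx Sy E; apply: inj => //; rewrite E.
  + move=> y Sy.
    have [x [Sx Ex]] := surj (A y) (ex_intro _ y erefl).
    by exists x; split=> //; apply: Ainj => //; apply: Sf.
- case=> _ inj surj; split.
  + by move=> x _; exists (f x).
  + by move=> x y Sx Sy E; apply: inj => //; apply: Ainj => //; apply: Sf.
  + move=> y Sy; have [SUy AUy] := SU y Sy.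
    have [x [Sx Ex]] := surj _ SUy.
    by exists x; rewrite Ex.
Qed.

End Abs.

Import FalgLfun.

Section Glue.
Variables (F : finFieldType) (L : fieldExtType F).
Local Notation q := #|F|.
Local Notation Phi := (horner_alg (sig L)).

Lemma sigX i (x : L) : (sig L ^+ i) x = x ^+ (q ^ i).
Proof.
elim: i => [|i IH]; first by rewrite expr0 expn0 expr1 id_lfunE.
by rewrite exprSr lfun_mulE IH sigE -exprM expnSr.
Qed.

Lemma linqE (u : {poly F}) x : (linq L q u).[x] = Phi u x.
Proof.
have -> : Phi u = Phi (\sum_(i < size u) u`_i *: 'X^i) by rewrite -poly_def coefK.
rewrite /linq horner_sum rmorph_sum sum_lfunE; apply: eq_bigr => i _.
rewrite hornerCM hornerXn -mul_polyC rmorphM /= horner_algC rmorphXn /= horner_algX.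
by rewrite !mulr_algl scale_lfunE sigX.
Qed.

Lemma PhiM a b x : Phi a (Phi b x) = Phi (b * a) x.
Proof. by rewrite rmorphM lfun_mulE. Qed.

Lemma PhiXn1 n : \dim {:L} = n -> Phi ('X^n - 1) = 0.
Proof.
move=> dL; apply/lfunP => x.
rewrite rmorphB rmorphXn rmorph1 /= horner_algX add_lfunE opp_lfunE sigX id_lfunE.
have := Fermat's_little_theorem {:L}%AS x.
by rewrite memvf dL => /esym/eqP ->; rewrite subrr zero_lfunE.
Qed.

End Glue.

Lemma permutes_set_ext (T : Type) (S : T -> Prop) phi psi :
  (forall x, phi x = psi x) -> permutes_set S phi <-> permutes_set S psi.
Proof.
move=> E; split; case=> h1 h2 h3; split.
- by move=> x Sx; rewrite -E; apply: h1.
- by move=> x y Sx Sy; rewrite -!E; apply: h2.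
- by move=> y Sy; have [x [Sx Ex]] := h3 y Sy; exists x; rewrite -E.
- by move=> x Sx; rewrite E; apply: h1.
- by move=> x y Sx Sy; rewrite !E; apply: h2.
- by move=> y Sy; have [x [Sx Ex]] := h3 y Sy; exists x; rewrite E.
Qed.

Theorem proposition2p7 (F : finFieldType) (L : fieldExtType F) (n : nat)
    (n_gt0 : (0 < n)%N) (dimL : \dim {: L} = n)
    (g h : {poly F})
    (cop : coprimep g h)
    (g_dvd : g %| 'X^n - 1)
    (dvd_gh : 'X^n - 1 %| g * h) :
  let q := #|F| in
  let Lg := linq L q g in
  let Lh := linq L q h in
  forall f : {poly L},
    (perm_poly (f \Po Lg + Lh) <->
       permutes_set (poly_image Lg) (fun x => (Lg \Po f).[x]))
    /\
    ((forall y, poly_image Lg y -> poly_image Lg f.[y]) ->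
       (perm_poly (f \Po Lg + Lh) <->
          permutes_set (poly_image Lg) (fun x => f.[x]))).
Proof.
move=> q Lg Lh f.
have [[u v] /= Euv] := Bezout_eq1_coprimepP _ _ cop.
have [k Ek] := dvdpP _ _ dvd_gh.
pose A := fun x => Lg.[x]; pose B := fun x => Lh.[x].
pose U := horner_alg (sig L) u; pose W := horner_alg (sig L) v.
have EA x : A x = horner_alg (sig L) g x by rewrite /A linqE.
have EB x : B x = horner_alg (sig L) h x by rewrite /B linqE.
have AD x y : A (x + y) = A x + A y by rewrite !EA raddfD.
have AN x : A (- x) = - A x by rewrite !EA raddfN.
have BD x y : B (x + y) = B x + B y by rewrite !EB raddfD.
have BN x : B (- x) = - B x by rewrite !EB raddfN.
have U0 : U 0 = 0 by rewrite raddf0.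
have W0 : W 0 = 0 by rewrite raddf0.
have dec x : x = U (A x) + W (B x).
  by rewrite EA EB /U /W !PhiM -add_lfunE -rmorphD mulrC [h * _]mulrC Euv rmorph1 id_lfunE.
have ghz : horner_alg (sig L) (g * h) = 0 by rewrite Ek rmorphM /= PhiXn1 // mulr0.
have AB x : A (B x) = 0 by rewrite EA EB PhiM mulrC ghz zero_lfunE.
have BA x : B (A x) = 0 by rewrite EA EB PhiM ghz zero_lfunE.
have AU x : A (U x) = U (A x) by rewrite !EA /U !PhiM mulrC.
have BU x : B (U x) = U (B x) by rewrite !EB /U !PhiM mulrC.
have AW x : A (W x) = W (A x) by rewrite !EA /W !PhiM mulrC.
have BW x : B (W x) = W (B x) by rewrite !EB /W !PhiM mulrC.
have P1 := abs_part1 AD AN BD BN U0 W0 dec AB BA BU AW BW (fun y => f.[y]).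
have P2 := @abs_part2 _ _ _ _ _ AD W0 dec AB AU AW (fun y => f.[y]).
have Ebij : perm_poly (f \Po Lg + Lh) <-> bijective (fun x => f.[A x] + B x).
  rewrite /perm_poly; split=> Hb; apply: (eq_bij Hb) => x /=; by rewrite hornerD horner_comp.
split.
  apply: (iff_trans Ebij); apply: (iff_trans P1).
  by apply: permutes_set_ext => x; rewrite horner_comp.
move=> Hf; apply: (iff_trans Ebij); apply: (iff_trans P1).
have Hf' : forall y, (exists c, A c = y) -> exists c, A c = f.[y] := Hf.
have := P2 Hf'.
by rewrite /poly_image /A.
Qed.
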